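(* If $\mathcal{R}$ is a call-by-value coupled logical bisimulation, then so is $\mathcal{R}^V=\left(\mathcal{R}_1^\star,\ \mathcal{R}_2\langle\mathcal{R}_1^\star\rangle_v\cup\mathcal{R}_1^\star\right)$. Consequently: if $M\approx^v_1 N$ then $C[M]\approx^v_1 C[N]$ for every context $C$ with $C[M],C[N]$ closed; and if $E\approx^v_2 F$ then $\mathcal{E}[E]\approx^v_2\mathcal{E}[F]$ for every call-by-value evaluation context $\mathcal{E}$.
   Context: $\Lambda^\bullet$ is the set of closed $\lambda$-terms; values are closed abstractions. Call-by-value reduction on closed terms: $MN\longrightarrow MN'$ if $N\longrightarrow N'$; $MV\longrightarrow M'V$ if $M\longrightarrow M'$ and $V$ is a value; $(\lambda x.P)V\longrightarrow P[V/x]$ if $V$ is a value; $\Longrightarrow$ is the reflexive transitive closure. Contexts are generated by $C::=x\mid[\cdot]\mid C\,C\mid\lambda x.C$, possibly with several holes numbered left to right; $C[\widetilde M]$ fills the $i$-th hole with $M_i$; $C[M]$ fills every hole with $M$. For $\mathcal{R}\subseteq\Lambda^\bullet\times\Lambda^\bullet$, $\mathcal{R}^\star=\{(C[\widetilde M],C[\widetilde N]) : C\text{ a context},\ M_i\,\mathcal{R}\,N_i\ \forall i,\ C[\widetilde M],C[\widetilde N]\in\Lambda^\bullet\}$. For relations $\mathcal{R},\mathcal{R}'$ on $\Lambda^\bullet$, $\mathcal{R}\langle\mathcal{R}'\rangle_v$ is the least relation such that: $X\,\mathcal{R}\,Y$ implies $X\,\mathcal{R}\langle\mathcal{R}'\rangle_v\,Y$;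 if $M\,\mathcal{R}'\,N$ and $X\,\mathcal{R}\langle\mathcal{R}'\rangle_v\,Y$ then $MX\,\mathcal{R}\langle\mathcal{R}'\rangle_v\,NY$; if $V,W$ are values with $V\,\mathcal{R}'\,W$ and $X\,\mathcal{R}\langle\mathcal{R}'\rangle_v\,Y$ then $XV\,\mathcal{R}\langle\mathcal{R}'\rangle_v\,YW$. Call-by-value evaluation contexts: $\mathcal{E}::=[\cdot]\mid M\,\mathcal{E}\mid\mathcal{E}\,V$ ($M\in\Lambda^\bullet$, $V$ a value). A coupled relation is a pair $(\mathcal{R}_1,\mathcal{R}_2)$ of relations on $\Lambda^\bullet$ with $\mathcal{R}_1\subseteq\mathcal{R}_2$. It is a call-by-value coupled logical bisimulation if whenever $M\,\mathcal{R}_2\,N$: (1) if $M\longrightarrow M'$ then there is $N'$ with $N\Longrightarrow N'$ and $M'\,\mathcal{R}_2\,N'$; (2) if $M=\lambda x.M'$ then $N\Longrightarrow\lambda x.N'$ for some $N'$, $\lambda x.M'\,\mathcal{R}_1\,\lambda x.N'$, and for all values $P,Q$ with $P\,\mathcal{R}_1^\star\,Q$, $M'[P/x]\,\mathcal{R}_2\,N'[Q/x]$; (3) the converses of (1),(2) with $M$ and $N$ exchanged. $(\approx^v_1,\approx^v_2)$ is the componentwise union of all call-by-value coupled logical bisimulations. *)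

(* Defs.v *)
From Stdlib Require Import Arith.

Inductive term : Type :=
| Var : nat -> term
| App : term -> term -> term
| Lam : term -> term.

Fixpoint closed_at (k : nat) (t : term) : Prop :=
  match t with
  | Var n => n < k
  | App t u => closed_at k t /\ closed_at k u
  | Lam t => closed_at (S k) t
  end.

Definition closed (t : term) : Prop := closed_at 0 t.

Definition value (t : term) : Prop := closed t /\ exists b, t = Lam b.

(* subst k P t : replace index k by P (P closed, so no lifting is needed),
   indices above k are decremented (the binder disappears). *)
Fixpoint subst (k : nat) (P : term) (t : term) : term :=
  match t with
  | Var n => if Nat.ltb n k then Var n
             else if Nat.eqb n k then P else Var (n - 1)
  | App t u => App (subst k P t) (subst k P u)
  | Lam t => Lam (subst (S k) P t)
  end.

Definition subst0 (M' P : term) : term := subst 0 P M'.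

(* call-by-value reduction on closed terms (right-to-left) *)
Inductive step : term -> term -> Prop :=
| step_appR : forall M N N', closed M -> step N N' -> step (App M N) (App M N')
| step_appL : forall M M' V, value V -> step M M' -> step (App M V) (App M' V)
| step_beta : forall P V, closed (Lam P) -> value V ->
    step (App (Lam P) V) (subst0 P V).

Inductive steps : term -> term -> Prop :=
| steps_refl : forall M, steps M M
| steps_step : forall M M' M'', step M M' -> steps M' M'' -> steps M M''.

Definition rel := term -> term -> Prop.

(* multi-hole contexts C ::= x | [.] | C C | \x.C ; holes numbered left to right *)
Inductive ctx : Type :=
| CVar : nat -> ctx
| CHole : ctx
| CApp : ctx -> ctx -> ctx
| CLam : ctx -> ctx.

Fixpoint nholes (C : ctx) : nat :=
  match C with
  | CVar _ => 0
  | CHole => 1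
  | CApp C1 C2 => nholes C1 + nholes C2
  | CLam C => nholes C
  end.

(* fill_from k C Ms : fill the i-th hole of C (from 0) with Ms (k + i).
   Holes are filled by plain syntactic replacement (capture allowed). *)
Fixpoint fill_from (k : nat) (C : ctx) (Ms : nat -> term) : term :=
  match C with
  | CVar n => Var n
  | CHole => Ms k
  | CApp C1 C2 => App (fill_from k C1 Ms) (fill_from (k + nholes C1) C2 Ms)
  | CLam C => Lam (fill_from k C Ms)
  end.

Definition fill (C : ctx) (Ms : nat -> term) : term := fill_from 0 C Ms.

Definition fill1 (C : ctx) (M : term) : term := fill C (fun _ => M).

Definition star (R : rel) : rel := fun X Y =>
  exists (C : ctx) (Ms Ns : nat -> term),
    (forall i, i < nholes C -> R (Ms i) (Ns i)) /\
    X = fill C Ms /\ Y = fill C Ns /\ closed X /\ closed Y.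

Inductive bracket (R R' : rel) : rel :=
| br_base : forall X Y, R X Y -> bracket R R' X Y
| br_appL : forall M N X Y, R' M N -> bracket R R' X Y ->
    bracket R R' (App M X) (App N Y)
| br_appR : forall V W X Y, value V -> value W -> R' V W -> bracket R R' X Y ->
    bracket R R' (App X V) (App Y W).

Definition runion (R S : rel) : rel := fun X Y => R X Y \/ S X Y.

Definition rel_on_closed (R : rel) : Prop :=
  forall M N, R M N -> closed M /\ closed N.

Definition coupled (R1 R2 : rel) : Prop :=
  rel_on_closed R1 /\ rel_on_closed R2 /\ (forall M N, R1 M N -> R2 M N).

Definition cbv_cl_bisim (R1 R2 : rel) : Prop :=
  coupled R1 R2 /\
  (forall M N, R2 M N ->
     (forall M', step M M' -> exists N', steps N N' /\ R2 M' N') /\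
     (forall M', M = Lam M' -> exists N', steps N (Lam N') /\ R1 (Lam M') (Lam N') /\
        forall P Q, value P -> value Q -> star R1 P Q -> R2 (subst0 M' P) (subst0 N' Q)) /\
     (forall N', step N N' -> exists M', steps M M' /\ R2 M' N') /\
     (forall N', N = Lam N' -> exists M', steps M (Lam M') /\ R1 (Lam M') (Lam N') /\
        forall P Q, value P -> value Q -> star R1 P Q -> R2 (subst0 M' P) (subst0 N' Q))).

Definition approx1 : rel := fun M N =>
  exists R1 R2, cbv_cl_bisim R1 R2 /\ R1 M N.
Definition approx2 : rel := fun M N =>
  exists R1 R2, cbv_cl_bisim R1 R2 /\ R2 M N.

Inductive ectx : Type :=
| EHole : ectx
| EAppR : term -> ectx -> ectx
| EAppL : ectx -> term -> ectx.

Fixpoint ectx_ok (E : ectx) : Prop :=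
  match E with
  | EHole => True
  | EAppR M E => closed M /\ ectx_ok E
  | EAppL E V => value V /\ ectx_ok E
  end.

Fixpoint plug (E : ectx) (t : term) : term :=
  match E with
  | EHole => t
  | EAppR M E => App M (plug E t)
  | EAppL E V => App (plug E t) V
  end.

(* Main.v *)
Require Import Defs.
From Stdlib Require Import Arith Lia.

Inductive cc (R : rel) : rel :=
| cc_base : forall M N, R M N -> cc R M N
| cc_var : forall n, cc R (Var n) (Var n)
| cc_app : forall M1 N1 M2 N2, cc R M1 N1 -> cc R M2 N2 -> cc R (App M1 M2) (App N1 N2)
| cc_lam : forall M N, cc R M N -> cc R (Lam M) (Lam N).

Lemma fill_from_ext : forall C k Ms Ms', (forall i, k <= i < k + nholes C -> Ms i = Ms' i) ->
  fill_from k C Ms = fill_from k C Ms'.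
Proof.
  induction C; intros k Ms Ms' H; simpl in *.
  - reflexivity.
  - apply H; lia.
  - rewrite (IHC1 k Ms Ms'), (IHC2 (k + nholes C1) Ms Ms'); auto; intros; apply H; lia.
  - f_equal; auto.
Qed.

Lemma fill_from_shift : forall C k j Ms,
  fill_from (k + j) C Ms = fill_from k C (fun i => Ms (i + j)).
Proof.
  induction C; intros k j Ms; simpl.
  - reflexivity.
  - reflexivity.
  - rewrite IHC1. replace (k + j + nholes C1) with (k + nholes C1 + j) by lia.
    rewrite IHC2. reflexivity.
  - rewrite IHC. reflexivity.
Qed.

Lemma fill_from_shift0 : forall C j Ms,
  fill_from j C Ms = fill_from 0 C (fun i => Ms (i + j)).
Proof. intros; apply (fill_from_shift C 0 j). Qed.

Lemma fill_cc : forall R C k Ms Ns, (forall i, k <= i < k + nholes C -> R (Ms i) (Ns i)) ->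
  cc R (fill_from k C Ms) (fill_from k C Ns).
Proof.
  induction C; intros k Ms Ns H; simpl in *.
  - apply cc_var.
  - apply cc_base, H; lia.
  - apply cc_app; [apply IHC1|apply IHC2]; intros; apply H; lia.
  - apply cc_lam; auto.
Qed.

Lemma cc_fill : forall R X Y, cc R X Y -> exists C Ms Ns,
  (forall i, i < nholes C -> R (Ms i) (Ns i)) /\ X = fill C Ms /\ Y = fill C Ns.
Proof.
  intros R X Y H; induction H.
  - exists CHole, (fun _ => M), (fun _ => N); simpl; repeat split; auto.
  - exists (CVar n), (fun _ => Var 0), (fun _ => Var 0); simpl; repeat split; auto; intros; lia.
  - destruct IHcc1 as [C1 [Ms1 [Ns1 [H1 [E1 F1]]]]].
    destruct IHcc2 as [C2 [Ms2 [Ns2 [H2 [E2 F2]]]]].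
    set (n1 := nholes C1).
    exists (CApp C1 C2), (fun i => if i <? n1 then Ms1 i else Ms2 (i - n1)),
      (fun i => if i <? n1 then Ns1 i else Ns2 (i - n1)).
    split; [|split].
    + intros i Hi; simpl in Hi. destruct (Nat.ltb_spec i n1).
      * apply H1; lia.
      * apply H2; unfold n1 in *; lia.
    + unfold fill; simpl. subst. unfold fill. f_equal.
      * apply fill_from_ext; intros i Hi. destruct (Nat.ltb_spec i n1); [reflexivity|unfold n1 in *; lia].
      * rewrite (fill_from_shift0 C2 (nholes C1)). apply fill_from_ext; intros i Hi.
        destruct (Nat.ltb_spec (i + nholes C1) n1); [unfold n1 in *; lia|].
        f_equal; unfold n1; lia.
    + unfold fill; simpl. subst. unfold fill. f_equal.
      * apply fill_from_ext; intros i Hi. destruct (Nat.ltb_spec i n1); [reflexivity|unfold n1 in *; lia].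
      * rewrite (fill_from_shift0 C2 (nholes C1)). apply fill_from_ext; intros i Hi.
        destruct (Nat.ltb_spec (i + nholes C1) n1); [unfold n1 in *; lia|].
        f_equal; unfold n1; lia.
  - destruct IHcc as [C [Ms [Ns [H1 [E1 F1]]]]].
    exists (CLam C), Ms, Ns; unfold fill in *; simpl; subst; auto.
Qed.

Lemma star_iff : forall R X Y, star R X Y <-> (cc R X Y /\ closed X /\ closed Y).
Proof.
  intros R X Y; split.
  - intros [C [Ms [Ns [H [E [F [CX CY]]]]]]]. subst. repeat split; auto.
    apply fill_cc; intros; apply H; lia.
  - intros [H [CX CY]]. destruct (cc_fill _ _ _ H) as [C [Ms [Ns [H1 [E F]]]]].
    exists C, Ms, Ns; repeat split; auto.
Qed.

Lemma cc_refl : forall R t, cc R t t.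
Proof. intros R t; induction t; [apply cc_var|apply cc_app|apply cc_lam]; auto. Qed.

Definition flip (R : rel) : rel := fun x y => R y x.

Lemma cc_flip : forall R X Y, cc R X Y -> cc (flip R) Y X.
Proof. intros R X Y H; induction H; [apply cc_base|apply cc_var|apply cc_app|apply cc_lam]; auto. Qed.

Lemma star_flip : forall R X Y, star R X Y -> star (flip R) Y X.
Proof.
  intros R X Y H. apply star_iff in H as [H [CX CY]]. apply star_iff; repeat split; auto.
  apply cc_flip; auto.
Qed.

Lemma star_base : forall (R : rel) X Y, R X Y -> closed X -> closed Y -> star R X Y.
Proof. intros. apply star_iff; repeat split; auto. apply cc_base; auto. Qed.

Lemma star_app : forall R a b c d, star R a b -> star R c d -> star R (App a c) (App b d).
Proof.
  intros R a b c d H1 H2. apply star_iff in H1 as [H1 [C1 D1]].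
  apply star_iff in H2 as [H2 [C2 D2]]. apply star_iff; repeat split; auto.
  apply cc_app; auto.
Qed.

Lemma cc_star : forall R X Y, cc (star R) X Y -> cc R X Y.
Proof.
  intros R X Y H; induction H; [|apply cc_var|apply cc_app|apply cc_lam]; auto.
  apply star_iff in H; tauto.
Qed.

Lemma star_star : forall R X Y, star (star R) X Y -> star R X Y.
Proof.
  intros R X Y H. apply star_iff in H as [H [C D]]. apply star_iff; repeat split; auto.
  apply cc_star; auto.
Qed.

Lemma star_closed : forall R X Y, star R X Y -> closed X /\ closed Y.
Proof. intros R X Y H; apply star_iff in H; tauto. Qed.

Lemma closed_at_weak : forall t j k, closed_at j t -> j <= k -> closed_at k t.
Proof.
  induction t; intros j k H Hl; simpl in *.
  - lia.
  - destruct H; split; eauto.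
  - apply (IHt (S j)); auto; lia.
Qed.

Lemma subst_closed_id : forall t j k P, closed_at j t -> j <= k -> subst k P t = t.
Proof.
  induction t; intros j k P H Hl; simpl in *.
  - destruct (Nat.ltb_spec n k); [reflexivity|lia].
  - destruct H; f_equal; eauto.
  - f_equal; apply (IHt (S j)); auto; lia.
Qed.

Lemma subst_closed_at : forall t k P, closed_at (S k) t -> closed P -> closed_at k (subst k P t).
Proof.
  induction t; intros k P H HP; simpl in *.
  - destruct (Nat.ltb_spec n k); simpl; [lia|].
    destruct (Nat.eqb_spec n k).
    + apply (closed_at_weak _ 0); auto; lia.
    + simpl; lia.
  - destruct H; split; auto.
  - apply IHt; auto.
Qed.

Lemma closed_subst0 : forall P V, closed (Lam P) -> closed V -> closed (subst0 P V).
Proof. intros P V H HV. apply subst_closed_at; auto. Qed.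

Lemma cc_subst : forall R, rel_on_closed R -> forall M N, cc R M N ->
  forall P Q, cc R P Q -> forall k, cc R (subst k P M) (subst k Q N).
Proof.
  intros R HR M N H; induction H; intros P Q HPQ k; simpl.
  - destruct (HR _ _ H) as [CM CN].
    rewrite (subst_closed_id M 0), (subst_closed_id N 0); try lia; auto. apply cc_base; auto.
  - destruct (n <? k). apply cc_var. destruct (n =? k); auto. apply cc_var.
  - apply cc_app; auto.
  - apply cc_lam; auto.
Qed.

Lemma steps_trans : forall a b c, steps a b -> steps b c -> steps a c.
Proof. intros a b c H; induction H; intros; auto. eapply steps_step; eauto. Qed.

Lemma steps_one : forall a b, step a b -> steps a b.
Proof. intros; eapply steps_step; eauto; apply steps_refl. Qed.

Lemma steps_appR : forall M N N', closed M -> steps N N' -> steps (App M N) (App M N').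
Proof. intros M N N' CM H; induction H. apply steps_refl. eapply steps_step; eauto; apply step_appR; auto. Qed.

Lemma steps_appL : forall M M' V, value V -> steps M M' -> steps (App M V) (App M' V).
Proof. intros M M' V CV H; induction H. apply steps_refl. eapply steps_step; eauto; apply step_appL; auto. Qed.

Lemma value_nostep : forall V X, value V -> step V X -> False.
Proof. intros V X [_ [b E]] H; subst; inversion H. Qed.

Definition U (R1 R2 : rel) : rel := runion (bracket R2 (star R1)) (star R1).

Lemma bracket_lam : forall R S b Y, bracket R S (Lam b) Y -> R (Lam b) Y.
Proof. intros R S b Y H; inversion H; auto. Qed.

Lemma star_lam : forall R1 R2, cbv_cl_bisim R1 R2 -> forall M' N, star R1 (Lam M') N ->
  exists N', steps N (Lam N') /\ star R1 (Lam M') (Lam N') /\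
   forall P Q, value P -> value Q -> star R1 P Q -> U R1 R2 (subst0 M' P) (subst0 N' Q).
Proof.
  intros R1 R2 [[HC1 [HC2 HC12]] HS] M' N H.
  apply star_iff in H as [H [CM CN]]. inversion H; subst.
  - destruct (HS _ _ (HC12 _ _ H0)) as [_ [c2 _]].
    destruct (c2 M' eq_refl) as [N' [St [H1 H2]]].
    exists N'; repeat split; auto.
    + destruct (HC1 _ _ H1); apply star_base; auto.
    + intros; left; apply br_base; auto.
  - exists N0; repeat split; auto. apply steps_refl. apply star_iff; auto.
    intros P Q VP VQ HPQ. right. apply star_iff in HPQ as [HPQ [CP CQ]].
    apply star_iff; repeat split.
    + apply cc_subst; auto.
    + apply closed_subst0; auto.
    + apply closed_subst0; auto.
Qed.

Lemma star_value : forall R1 R2, cbv_cl_bisim R1 R2 -> forall V N, value V -> star R1 V N ->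
  exists W, steps N W /\ value W /\ star R1 V W.
Proof.
  intros R1 R2 HB V N [CV [b E]] H; subst.
  destruct (star_lam _ _ HB b N H) as [N' [St [H1 _]]].
  exists (Lam N'); repeat split; auto.
  - apply star_closed in H1; tauto.
  - eauto.
Qed.

Lemma star_step : forall R1 R2, cbv_cl_bisim R1 R2 -> forall M N, cc R1 M N -> closed M -> closed N ->
  forall M', step M M' -> exists N', steps N N' /\ U R1 R2 M' N'.
Proof.
  intros R1 R2 HB M N H. pose proof HB as [[HC1 [HC2 HC12]] HS].
  induction H; intros CM CN M' Hs.
  - destruct (HS _ _ (HC12 _ _ H)) as [c1 _].
    destruct (c1 _ Hs) as [N' [St H']]. exists N'; split; auto. left; apply br_base; auto.
  - unfold closed in CM; simpl in CM; lia.
  - destruct CM as [CM1 CM2]; destruct CN as [CN1 CN2].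
    assert (S1 : star R1 M1 N1) by (apply star_iff; auto).
    assert (S2 : star R1 M2 N2) by (apply star_iff; auto).
    inversion Hs; subst.
    + destruct (IHcc2 CM2 CN2 _ H5) as [N2' [St HU]].
      exists (App N1 N2'); split. apply steps_appR; auto.
      destruct HU as [HU|HU]. left; apply br_appL; auto. right; apply star_app; auto.
    + destruct (star_value _ _ HB _ _ H3 S2) as [W [StW [VW SW]]].
      destruct (IHcc1 CM1 CN1 _ H5) as [N1' [St HU]].
      exists (App N1' W); split.
      * eapply steps_trans. apply steps_appR; eauto. apply steps_appL; auto.
      * destruct HU as [HU|HU]. left; apply br_appR; auto. right; apply star_app; auto.
    + destruct (star_lam _ _ HB _ _ S1) as [N1' [St [SL HU]]].
      destruct (star_value _ _ HB _ _ H5 S2) as [W [StW [VW SW]]].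
      exists (subst0 N1' W); split.
      * eapply steps_trans. apply steps_appR; eauto.
        eapply steps_trans. apply steps_appL; eauto.
        apply steps_one. apply step_beta; auto. apply star_closed in SL; tauto.
      * apply HU; auto.
  - inversion Hs.
Qed.

Lemma forward_step : forall R1 R2, cbv_cl_bisim R1 R2 -> forall M N, U R1 R2 M N ->
  forall M', step M M' -> exists N', steps N N' /\ U R1 R2 M' N'.
Proof.
  intros R1 R2 HB M N HU. pose proof HB as [[HC1 [HC2 HC12]] HS].
  destruct HU as [H|H].
  2:{ apply star_iff in H as [H [CM CN]]. eapply star_step; eauto. }
  induction H; intros M' Hs.
  - destruct (HS _ _ H) as [c1 _].
    destruct (c1 _ Hs) as [N' [St H']]. exists N'; split; auto. left; apply br_base; auto.
  - pose proof (star_closed _ _ _ H) as [CM CN].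
    inversion Hs as [a1 a2 a3 a4 a5|b1 b2 b3 b4 b5|c1 c2 c3 c4]; subst.
    + destruct (IHbracket _ a5) as [Y' [St HU]].
      exists (App N Y'); split. apply steps_appR; auto.
      destruct HU as [HU|HU]. left; apply br_appL; auto. right; apply star_app; auto.
    + destruct b4 as [CX [b E]]; subst.
      pose proof (bracket_lam _ _ _ _ H0) as HR.
      destruct (HS _ _ HR) as [_ [c2 _]].
      destruct (c2 b eq_refl) as [Y' [StY [R1Y _]]].
      destruct (HC1 _ _ R1Y) as [_ CY'].
      apply star_iff in H as [Hc _].
      destruct (star_step _ _ HB _ _ Hc CM CN _ b5) as [N' [St HU]].
      exists (App N' (Lam Y')); split.
      * eapply steps_trans. apply steps_appR; eauto. apply steps_appL; auto. split; eauto.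
      * assert (SV : star R1 (Lam b) (Lam Y')) by (apply star_base; auto).
        destruct HU as [HU|HU]. left; apply br_appR; auto; split; eauto.
        right; apply star_app; auto.
    + destruct c4 as [CX [b E]]; subst.
      pose proof (bracket_lam _ _ _ _ H0) as HR.
      destruct (HS _ _ HR) as [_ [c2 _]].
      destruct (c2 b eq_refl) as [Y' [StY [R1Y _]]].
      destruct (HC1 _ _ R1Y) as [_ CY'].
      destruct (star_lam _ _ HB _ _ H) as [N' [St [SL HU]]].
      exists (subst0 N' (Lam Y')); split.
      * eapply steps_trans. apply steps_appR; eauto.
        eapply steps_trans. apply steps_appL; [split; eauto|eauto].
        apply steps_one. apply step_beta. apply star_closed in SL; tauto. split; eauto.
      * apply HU; [split; eauto|split; eauto|apply star_base; auto].
  - inversion Hs as [a1 a2 a3 a4 a5|b1 b2 b3 b4 b5|c1 c2 c3 c4]; subst.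
    + exfalso; exact (value_nostep _ _ H a5).
    + destruct (IHbracket _ b5) as [Y' [St HU]].
      exists (App Y' W); split. apply steps_appL; auto.
      destruct HU as [HU|HU]. left; apply br_appR; auto. right; apply star_app; auto.
    + pose proof (bracket_lam _ _ _ _ H2) as HR.
      destruct (HS _ _ HR) as [_ [cc2 _]].
      destruct (cc2 c1 eq_refl) as [Y' [StY [R1Y HY]]].
      destruct (HC1 _ _ R1Y) as [_ CY'].
      exists (subst0 Y' W); split.
      * eapply steps_trans. apply steps_appL; eauto.
        apply steps_one. apply step_beta; auto.
      * left; apply br_base; auto.
Qed.

Lemma forward_lam : forall R1 R2, cbv_cl_bisim R1 R2 -> forall M N, U R1 R2 M N ->
  forall M', M = Lam M' -> exists N', steps N (Lam N') /\ star R1 (Lam M') (Lam N') /\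
   forall P Q, value P -> value Q -> star R1 P Q -> U R1 R2 (subst0 M' P) (subst0 N' Q).
Proof.
  intros R1 R2 HB M N HU M' E; subst. pose proof HB as [[HC1 [HC2 HC12]] HS].
  destruct HU as [H|H].
  - apply bracket_lam in H. destruct (HS _ _ H) as [_ [c2 _]].
    destruct (c2 M' eq_refl) as [N' [St [H1 H2]]].
    exists N'; repeat split; auto.
    + destruct (HC1 _ _ H1); apply star_base; auto.
    + intros; left; apply br_base; auto.
  - eapply star_lam; eauto.
Qed.

Lemma bisim_flip : forall R1 R2, cbv_cl_bisim R1 R2 -> cbv_cl_bisim (flip R1) (flip R2).
Proof.
  intros R1 R2 [[HC1 [HC2 HC12]] HS]. split.
  - unfold flip; repeat split; intros.
    + apply (HC1 _ _ H). + apply (HC1 _ _ H). + apply (HC2 _ _ H). + apply (HC2 _ _ H).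
    + auto.
  - intros M N H. destruct (HS _ _ H) as [c1 [c2 [c3 c4]]]. repeat split.
    + exact c3.
    + intros M' E. destruct (c4 M' E) as [N' [St [H1 H2]]]. exists N'; repeat split; auto.
      intros P Q VP VQ SPQ. apply H2; auto. apply (star_flip _ _ _ SPQ).
    + exact c1.
    + intros N' E. destruct (c2 N' E) as [M' [St [H1 H2]]]. exists M'; repeat split; auto.
      intros P Q VP VQ SPQ. apply H2; auto. apply (star_flip _ _ _ SPQ).
Qed.

Lemma bracket_flip : forall R S M N, bracket R S M N -> bracket (flip R) (flip S) N M.
Proof. intros R S M N H; induction H. apply br_base; auto. apply br_appL; auto. apply br_appR; auto. Qed.

Lemma bracket_monoS : forall R S S', (forall x y, S x y -> S' x y) -> forall M N,
  bracket R S M N -> bracket R S' M N.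
Proof. intros R S S' HS M N H; induction H. apply br_base; auto. apply br_appL; auto. apply br_appR; auto. Qed.

Lemma U_flip : forall R1 R2 M N, U R1 R2 M N -> U (flip R1) (flip R2) N M.
Proof.
  intros R1 R2 M N [H|H].
  - left. apply bracket_flip in H. eapply bracket_monoS; [|exact H].
    intros x y Hs. apply (star_flip _ _ _ Hs).
  - right. apply star_flip; auto.
Qed.

Lemma bracket_closed : forall R1 R2, cbv_cl_bisim R1 R2 -> forall M N,
  bracket R2 (star R1) M N -> closed M /\ closed N.
Proof.
  intros R1 R2 [[HC1 [HC2 HC12]] HS] M N H; induction H.
  - auto.
  - apply star_closed in H; unfold closed in *; simpl; tauto.
  - destruct H as [CV _]; destruct H0 as [CW _]; unfold closed in *; simpl; tauto.
Qed.

Lemma part1 : forall R1 R2 : rel, cbv_cl_bisim R1 R2 ->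
     cbv_cl_bisim (star R1) (runion (bracket R2 (star R1)) (star R1)).
Proof.
  intros R1 R2 HB. split.
  - repeat split.
    + apply star_closed in H; tauto.
    + apply star_closed in H; tauto.
    + destruct H as [H|H]; [eapply bracket_closed in H; eauto; tauto|apply star_closed in H; tauto].
    + destruct H as [H|H]; [eapply bracket_closed in H; eauto; tauto|apply star_closed in H; tauto].
    + intros; right; auto.
  - intros M N H. fold (U R1 R2) in *. pose proof (bisim_flip _ _ HB) as HF. repeat split.
    + eapply forward_step; eauto.
    + intros M' E. destruct (forward_lam _ _ HB _ _ H _ E) as [N' [St [SL HU]]].
      exists N'; repeat split; auto. intros; apply HU; auto; apply star_star; auto.
    + intros N' Hs. destruct (forward_step _ _ HF _ _ (U_flip _ _ _ _ H) _ Hs) as [M' [St HU]].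
      exists M'; split; auto. exact (U_flip _ _ _ _ HU).
    + intros N' E. destruct (forward_lam _ _ HF _ _ (U_flip _ _ _ _ H) _ E) as [M' [St [SL HU]]].
      exists M'; repeat split; auto.
      * exact (star_flip _ _ _ SL).
      * intros P Q VP VQ SPQ. exact (U_flip _ _ _ _ (HU Q P VQ VP (star_flip _ _ _ (star_star _ _ _ SPQ)))).
Qed.

Lemma plug_bracket : forall R1 R2 Ec E F, ectx_ok Ec -> R2 E F ->
  bracket R2 (star R1) (plug Ec E) (plug Ec F).
Proof.
  induction Ec; intros E F Hok H; simpl in *.
  - apply br_base; auto.
  - destruct Hok. apply br_appL; auto. apply star_iff; repeat split; auto. apply cc_refl.
  - destruct Hok. apply br_appR; auto. apply star_iff; repeat split; try apply cc_refl; apply H0.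
Qed.

Theorem mainTheorem16 :
  (forall R1 R2 : rel, cbv_cl_bisim R1 R2 ->
     cbv_cl_bisim (star R1) (runion (bracket R2 (star R1)) (star R1))) /\
  (forall (M N : term) (C : ctx), approx1 M N ->
     closed (fill1 C M) -> closed (fill1 C N) ->
     approx1 (fill1 C M) (fill1 C N)) /\
  (forall (E F : term) (Ec : ectx), ectx_ok Ec -> approx2 E F ->
     approx2 (plug Ec E) (plug Ec F)).
Proof.
  split; [|split].
  - exact part1.
  - intros M N C [R1 [R2 [HB H]]] CM CN.
    exists (star R1), (runion (bracket R2 (star R1)) (star R1)); split.
    + apply part1; auto.
    + exists C, (fun _ => M), (fun _ => N); repeat split; auto.
  - intros E F Ec Hok [R1 [R2 [HB H]]].
    exists (star R1), (runion (bracket R2 (star R1)) (star R1)); split.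
    + apply part1; auto.
    + left. apply plug_bracket; auto.
Qed.
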